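(* For $n\ge 3$, the commutator subgroup $[P_n,P_n]$ of the pure braid group $P_n$ is densely ordered by the restriction of the Dehornoy ordering of $B_n$.
   Context: $B_n$ is the Artin braid group with generators $\sigma_1,\dots,\sigma_{n-1}$; $P_n$ is the kernel of the natural map $B_n\to S_n$ to the symmetric group. A word in the generators is $i$-positive if it contains only $\sigma_1,\dots,\sigma_i$ and their inverses, $\sigma_i$ occurs, and every occurrence of $\sigma_i$ has positive exponent; a braid is $i$-positive if some representative word is. The Dehornoy ordering is the left-invariant total order on $B_n$ whose positive cone consists of all braids that are $i$-positive for some $i$. A subgroup is densely ordered if it has no least positive element (equivalently, between any two of its elements lies a third). *)

(* Defs.v *)
From mathcomp Require Import all_boot.
Set Implicit Arguments. Unset Strict Implicit. Unset Printing Implicit Defensive.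

(* A letter (i, true) is sigma_i, (i, false) is sigma_i^{-1}; 1 <= i <= n-1. *)
Definition letter := (nat * bool)%type.
Definition word := seq letter.

Definition valid (n : nat) (w : word) : bool :=
  all (fun l : letter => (0 < l.1) && (l.1 < n)) w.

Definition winv (w : word) : word := rev (map (fun l : letter => (l.1, ~~ l.2)) w).

Inductive braid_step (n : nat) : word -> word -> Prop :=
| bs_free i b : 0 < i < n -> braid_step n [:: (i, b); (i, ~~ b)] [::]
| bs_comm i j b c : 0 < i < n -> 0 < j < n -> (i.+1 < j) || (j.+1 < i) ->
    braid_step n [:: (i, b); (j, c)] [:: (j, c); (i, b)]
| bs_braid i : 0 < i -> i.+1 < n ->
    braid_step n [:: (i, true); (i.+1, true); (i, true)]
                 [:: (i.+1, true); (i, true); (i.+1, true)].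

Inductive beq (n : nat) : word -> word -> Prop :=
| beq_step u v a b : braid_step n a b -> beq n (u ++ a ++ v) (u ++ b ++ v)
| beq_refl w : beq n w w
| beq_sym w w' : beq n w w' -> beq n w' w
| beq_trans w1 w2 w3 : beq n w1 w2 -> beq n w2 w3 -> beq n w1 w3.

Definition ipos_word (i : nat) (w : word) : bool :=
  all (fun l : letter => (0 < l.1) && (l.1 <= i)) w &&
  has (fun l : letter => l.1 == i) w &&
  all (fun l : letter => (l.1 == i) ==> l.2) w.

(* Positive cone of the Dehornoy ordering of B_n. *)
Definition dpos (n : nat) (w : word) : Prop :=
  exists w' : word, [/\ beq n w w', valid n w' & exists i, ipos_word i w'].

(* Image of the braid in S_n, acting on positions 1..n. *)
Definition swap_at (i k : nat) : nat :=
  if k == i then i.+1 else if k == i.+1 then i else k.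
Definition perm_act (w : word) (k : nat) : nat :=
  foldr (fun l : letter => swap_at l.1) k w.

Definition pure (n : nat) (w : word) : bool :=
  [forall k : 'I_n, perm_act w k.+1 == k.+1].

Definition commw (a b : word) : word := winv a ++ winv b ++ a ++ b.

(* Membership in the commutator subgroup [P_n, P_n]: a product of commutators
   of pure braids (closed under inverses since [a,b]^{-1} = [b,a]). *)
Definition in_comm_PP (n : nat) (w : word) : Prop :=
  exists ps : seq (word * word),
    all (fun p : word * word =>
           [&& valid n p.1, valid n p.2, pure n p.1 & pure n p.2]) ps /\
    beq n w (flatten (map (fun p : word * word => commw p.1 p.2) ps)).

(* The subgroup (given by a membership predicate) is densely ordered by the
   restricted Dehornoy order: no least positive element, i.e. every positive
   element w of H has a positive v in H with v < w, i.e. v^{-1} w positive. *)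
Definition densely_ordered_sub (n : nat) (H : word -> Prop) : Prop :=
  forall w, valid n w -> H w -> dpos n w ->
    exists v, [/\ valid n v, H v, dpos n v & dpos n (winv v ++ w)].

(* Main.v *)
Require Import Defs.
From mathcomp Require Import all_boot.
From mathcomp Require Import zify.

Set Implicit Arguments. Unset Strict Implicit. Unset Printing Implicit Defensive.

Inductive move := Del of nat | Ins of nat & nat & bool | BF of nat & nat | BB of nat & nat.

Definition apply_move (m : move) (w : word) : option word :=
  match m with
  | Del k => match drop k w with
             | (i, b) :: (j, c) :: rest =>
                 if [&& i == j, c == ~~ b, 0 < i & i < 3] then Some (take k w ++ rest) else None
             | _ => None end
  | Ins k i b => if (0 < i) && (i < 3) then Some (take k w ++ (i, b) :: (i, ~~ b) :: drop k w) else None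
  | BF k i => match drop k w with
             | (a, true) :: (b, true) :: (c, true) :: rest =>
                 if [&& a == i, b == i.+1, c == i, 0 < i & i.+1 < 3] then
                   Some (take k w ++ [:: (i.+1, true); (i, true); (i.+1, true)] ++ rest) else None
             | _ => None end
  | BB k i => match drop k w with
             | (a, true) :: (b, true) :: (c, true) :: rest =>
                 if [&& a == i.+1, b == i, c == i.+1, 0 < i & i.+1 < 3] then
                   Some (take k w ++ [:: (i, true); (i.+1, true); (i, true)] ++ rest) else None
             | _ => None end
  end.

Fixpoint run (ms : seq move) (w : word) : option word :=
  match ms with
  | [::] => Some w
  | m :: ms' => match apply_move m w with Some w' => run ms' w' | None => None end
  end.

Lemma beq_stepw n u v a b : braid_step n a b -> beq n (u ++ a ++ v) (u ++ b ++ v).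
Proof. exact: beq_step. Qed.

Lemma apply_move_sound n m w w' : 2 < n -> apply_move m w = Some w' -> beq n w w'.
Proof.
move=> n2; have Hw := cat_take_drop.
case: m => [k|k i b|k i|k i] /=.
- case E: (drop k w) => [|[i b] [|[j c] rest]] //.
  case: ifP => // /and4P [/eqP Eij /eqP Ec Hi Hi3] [<-]; subst j c.
  rewrite -{1}(cat_take_drop k w) E.
  apply: (@beq_stepw n (take k w) rest [::(i,b);(i,~~b)] [::]).
  apply: bs_free; rewrite Hi /=; exact: leq_trans Hi3 n2.
- case: ifP => // /andP [Hi Hi3] [<-].
  apply: beq_sym.
  rewrite -[X in beq _ _ X](cat_take_drop k w).
  apply: (@beq_stepw n (take k w) (drop k w) [::(i,b);(i,~~b)] [::]).
  apply: bs_free; rewrite Hi /=; exact: leq_trans Hi3 n2.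
- case E: (drop k w) => [|[a [] ] [|[b [] ] [|[c [] ] rest]]] //.
  case: ifP => // /and5P [/eqP Ea /eqP Eb /eqP Ec Hi Hi3] [<-]; subst a b c.
  rewrite -{1}(cat_take_drop k w) E.
  exact: (@beq_stepw n (take k w) rest [:: (i, true); (i.+1, true); (i, true)] [:: (i.+1, true); (i, true); (i.+1, true)] (bs_braid Hi (leq_trans Hi3 n2))).
- case E: (drop k w) => [|[a [] ] [|[b [] ] [|[c [] ] rest]]] //.
  case: ifP => // /and5P [/eqP Ea /eqP Eb /eqP Ec Hi Hi3] [<-]; subst a b c.
  rewrite -{1}(cat_take_drop k w) E.
  apply: beq_sym; exact: (@beq_stepw n (take k w) rest [:: (i, true); (i.+1, true); (i, true)] [:: (i.+1, true); (i, true); (i.+1, true)] (bs_braid Hi (leq_trans Hi3 n2))).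
Qed.

Lemma run_sound n ms w w' : 2 < n -> run ms w = Some w' -> beq n w w'.
Proof.
move=> n2; elim: ms w => [|m ms IH] w /=; first by move=> [->]; exact: beq_refl.
case E: (apply_move m w) => [u|] // /IH H.
exact: beq_trans (apply_move_sound n2 E) H.
Qed.
Definition Yw : word := [:: (1, true); (1, true); (2, false); (2, false); (1, false); (1, false); (2, true); (2, true)].
Definition Y1 : word := [:: (1, true); (2, true); (1, false); (2, true); (1, false); (2, true); (1, false); (1, false)].
Definition Z2 : word := [:: (1, false); (2, true); (1, false); (2, true); (1, false); (2, true); (2, true)].
Definition ch1 : seq move := [:: Ins 3 2 true; Ins 4 1 true; BF 2 1; Del 1; Ins 7 1 true; BF 5 1; Del 4; Del 3; Ins 3 1 true; BF 1 1; Del 0].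
Definition ch2 : seq move := [:: Ins 2 2 false; Ins 0 1 false; BF 1 1; Del 3; Ins 3 1 false; BF 4 1; Del 6; Del 2; Ins 2 1 false; BF 3 1; Del 5; Del 4].
Definition pw : word := [:: (1, false); (1, false)].
Definition qw : word := [:: (2, true); (2, true)].
Lemma ch1_ok : run ch1 (winv Yw) = Some Y1. Proof. by vm_compute. Qed.
Lemma ch2_ok : run ch2 ((2, true) :: Yw) = Some Z2. Proof. by vm_compute. Qed.
Lemma Yw_def : Yw = commw pw qw. Proof. by []. Qed.

Lemma beq_catl n x u u' : beq n u u' -> beq n (x ++ u) (x ++ u').
Proof.
elim=> [u0 v a b Hs|w|w1 w2 _ IH|w1 w2 w3 _ IH1 _ IH2].
- have H := @beq_stepw n (x ++ u0) v a b Hs; by rewrite -!catA in H.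
- exact: beq_refl.
- exact: beq_sym.
- exact: beq_trans IH1 IH2.
Qed.

Lemma beq_catr n x u u' : beq n u u' -> beq n (u ++ x) (u' ++ x).
Proof.
elim=> [u0 v a b Hs|w|w1 w2 _ IH|w1 w2 w3 _ IH1 _ IH2].
- have H := @beq_stepw n u0 (v ++ x) a b Hs; by rewrite !catA in H *.
- exact: beq_refl.
- exact: beq_sym.
- exact: beq_trans IH1 IH2.
Qed.

Lemma beq_cat n u u' x x' : beq n u u' -> beq n x x' -> beq n (u ++ x) (u' ++ x').
Proof. move=> H1 H2; exact: beq_trans (beq_catr x H1) (beq_catl u' H2). Qed.

Lemma beq_mid n x y m m' : beq n m m' -> beq n (x ++ m ++ y) (x ++ m' ++ y).
Proof. move=> H; apply: beq_catl; exact: beq_catr. Qed.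

Lemma winv_cat u v : winv (u ++ v) = winv v ++ winv u.
Proof. by rewrite /winv map_cat rev_cat. Qed.

Lemma winv_cons a w : winv (a :: w) = winv w ++ [:: (a.1, ~~ a.2)].
Proof. by rewrite /winv /= rev_cons -cats1. Qed.

Lemma winvK w : winv (winv w) = w.
Proof.
elim: w => [|[i b] w IH] //; rewrite winv_cons winv_cat IH /= negbK.
by rewrite /winv.
Qed.

Lemma valid_cat n u v : valid n (u ++ v) = valid n u && valid n v.
Proof. exact: all_cat. Qed.

Lemma valid_winv n w : valid n (winv w) = valid n w.
Proof. by rewrite /valid /winv all_rev all_map. Qed.

Lemma cancel_l n w : valid n w -> beq n (winv w ++ w) [::].
Proof.
elim: w => [|[i b] w IH] /=; first by move=> _; exact: beq_refl.
move=> /andP [Hi Hw]; rewrite winv_cons /= -catA /=.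
have Hs : braid_step n [:: (i, ~~ b); (i, b)] [::].
  by have := @bs_free n i (~~ b) Hi; rewrite negbK.
apply: beq_trans (IH Hw).
exact: (@beq_stepw n (winv w) w _ _ Hs).
Qed.

Lemma cancel_r n w : valid n w -> beq n (w ++ winv w) [::].
Proof. by move=> H; have := @cancel_l n (winv w); rewrite winvK valid_winv; apply. Qed.

Lemma cancel_mid n S x y : valid n S -> beq n (x ++ S ++ winv S ++ y) (x ++ y).
Proof. move=> HS; have := beq_mid x y (cancel_r HS); by rewrite -catA. Qed.

Definition conj (S u : word) : word := winv S ++ u ++ S.

Lemma conj_mul n S u u' : valid n S -> beq n (conj S u ++ conj S u') (conj S (u ++ u')).
Proof.
move=> HS; rewrite /conj.
have := @cancel_mid n S (winv S ++ u) (u' ++ S) HS.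
by rewrite -!catA.
Qed.

Lemma winv_conj S u : winv (conj S u) = conj S (winv u).
Proof. by rewrite /conj !winv_cat winvK catA. Qed.

Lemma commw_conj n S p q : valid n S ->
  beq n (commw (conj S p) (conj S q)) (conj S (commw p q)).
Proof.
move=> HS; rewrite /commw !winv_conj.
apply: beq_trans (beq_catl _ (beq_catl _ (conj_mul _ _ HS))) _.
apply: beq_trans (beq_catl _ (conj_mul _ _ HS)) _.
exact: conj_mul.
Qed.

Lemma winv_commw p q : winv (commw p q) = commw q p.
Proof. by rewrite /commw !winv_cat !winvK !catA. Qed.

Lemma swap_atK i k : swap_at i (swap_at i k) = k.
Proof. rewrite /swap_at; repeat case: ifP; move=> *; lia. Qed.

Lemma perm_act_cat u v k : perm_act (u ++ v) k = perm_act u (perm_act v k).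
Proof. by rewrite /perm_act foldr_cat. Qed.

Lemma perm_act_winv w k : perm_act (winv w) (perm_act w k) = k.
Proof.
elim: w k => [|[i b] w IH] k //.
rewrite winv_cons perm_act_cat /=.
rewrite /perm_act /= -/(perm_act w k) swap_atK; exact: IH.
Qed.

Definition fixes (w : word) := forall k, perm_act w k = k.

Lemma fixes_conj S p : fixes p -> fixes (conj S p).
Proof. by move=> Hp k; rewrite /conj !perm_act_cat Hp perm_act_winv. Qed.

Lemma fixes_pure n p : fixes p -> pure n p.
Proof. by move=> Hp; apply/forallP => k; rewrite Hp. Qed.

Lemma fixes_pw : fixes pw. Proof. move=> k; exact: swap_atK. Qed.
Lemma fixes_qw : fixes qw. Proof. move=> k; exact: swap_atK. Qed.

Definition psum (w : word) := count (fun l : letter => l.2) w.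
Definition nsum (w : word) := count (fun l : letter => ~~ l.2) w.

Lemma step_es n a b : braid_step n a b -> psum a + nsum b = psum b + nsum a.
Proof. case=> [i c _|i j c d _ _ _|i _ _] /=; rewrite /psum /nsum /=; try case: c; try case: d; by []. Qed.

Lemma beq_es n w w' : beq n w w' -> psum w + nsum w' = psum w' + nsum w.
Proof.
elim=> [u v a b Hs|x|x y _ IH|x y z _ IH1 _ IH2].
- have := step_es Hs; rewrite /psum /nsum !count_cat; lia.
- by [].
- lia.
- lia.
Qed.

Lemma es_winv w : psum (winv w) = nsum w /\ nsum (winv w) = psum w.
Proof.
rewrite /psum /nsum /winv !count_rev !count_map; split; apply: eq_count => l //=.
by rewrite negbK.
Qed.

Lemma es_flatten (ps : seq (word * word)) :
  psum (flatten (map (fun p : word * word => commw p.1 p.2) ps)) =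
  nsum (flatten (map (fun p : word * word => commw p.1 p.2) ps)).
Proof.
elim: ps => [|[p q] ps IH] //=.
have [h1 h2] := es_winv p; have [h3 h4] := es_winv q.
move: IH h1 h2 h3 h4; rewrite /commw /psum /nsum /= !count_cat; lia.
Qed.

Definition wok (i : nat) (w : word) : bool :=
  all (fun l : letter => (0 < l.1) && (l.1 <= i)) w &&
  all (fun l : letter => (l.1 == i) ==> l.2) w.

Lemma ipos_cat i A Z B : wok i A -> ipos_word i Z -> wok i B -> ipos_word i (A ++ Z ++ B).
Proof.
rewrite /wok /ipos_word !all_cat !has_cat.
move=> /andP [a1 a2] /andP [/andP [z1 z2] z3] /andP [b1 b2].
by rewrite a1 a2 z1 z2 z3 b1 b2 /= orbT.
Qed.

Lemma wok_small i Y : all (fun l : letter => (0 < l.1) && (l.1 < 3)) Y -> 3 <= i -> wok i Y.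
Proof.
move=> H Hi; apply/andP; split; apply/allP => l /(allP H) /andP [h1 h2].
- apply/andP; split => //; lia.
- apply/implyP => /eqP E; lia.
Qed.

Lemma wok_one S : all (fun l : letter => l.1 == 1) S -> wok 2 S /\ wok 2 (winv S).
Proof.
have H : forall S, all (fun l : letter => l.1 == 1) S -> wok 2 S.
  move=> T HT; apply/andP; split; apply/allP => l /(allP HT) /eqP E.
  - by rewrite E.
  - by rewrite E.
move=> HS; split; first exact: H.
apply: H; by rewrite /winv all_rev all_map.
Qed.

Lemma valid_small n Y : all (fun l : letter => (0 < l.1) && (l.1 < 3)) Y -> 2 < n -> valid n Y.
Proof.
move=> H Hn; apply/allP => l /(allP H) /andP [h1 h2]; apply/andP; split => //; lia.
Qed.

Lemma last2 w : all (fun l : letter => (0 < l.1) && (l.1 <= 2)) w ->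
  has (fun l : letter => l.1 == 2) w ->
  exists A b S, w = A ++ (2, b) :: S /\ all (fun l : letter => l.1 == 1) S.
Proof.
elim: w => [|[i c] w IH] //= /andP [Hic Hw].
case Hh: (has (fun l : letter => l.1 == 2) w).
- move=> _; have [A [b [S [-> HS]]]] := IH Hw Hh.
  by exists ((i, c) :: A), b, S.
- rewrite orbF => /eqP Ei; exists [::], c, w; split; first by rewrite Ei.
  apply/allP => l Hl; have := allP Hw l Hl; have := hasPn (negbT Hh) l Hl.
  move=> /= h1 /andP [h2 h3]; apply/eqP; lia.
Qed.

Lemma small_Yw : all (fun l : letter => (0 < l.1) && (l.1 < 3)) Yw. Proof. by []. Qed.
Lemma small_Y1 : all (fun l : letter => (0 < l.1) && (l.1 < 3)) Y1. Proof. by []. Qed.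
Lemma small_Z2 : all (fun l : letter => (0 < l.1) && (l.1 < 3)) Z2. Proof. by []. Qed.
Lemma small_pw : all (fun l : letter => (0 < l.1) && (l.1 < 3)) pw. Proof. by []. Qed.
Lemma small_qw : all (fun l : letter => (0 < l.1) && (l.1 < 3)) qw. Proof. by []. Qed.
Lemma ipos_Y1 : ipos_word 2 Y1. Proof. by []. Qed.
Lemma ipos_Z2 : ipos_word 2 Z2. Proof. by []. Qed.
Lemma winvYw : winv Yw = commw qw pw. Proof. by []. Qed.

Theorem proposition3p3 (n : nat) : 3 <= n -> densely_ordered_sub n (in_comm_PP n).
Proof.
move=> Hn w Hw [ps [Hps Heq]] [w' [Hww' Hw' [i Hi]]].
have n2 : 2 < n by [].
move: (Hi); rewrite /ipos_word => /andP [/andP [Hb Hh] Hs].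
have Hi0 : 0 < i.
  case/hasP: Hh => l Hl /eqP <-; by case/andP: (allP Hb l Hl).
case: (ltngtP i 2) => [Hlt|Hgt|Heq2].
- (* i = 1: impossible by exponent sum *)
  have Ei : i = 1 by lia.
  subst i.
  have Hall : all (fun l : letter => l.2) w'.
    apply/allP => l Hl; have /andP [h1 h2] := allP Hb l Hl.
    apply: (implyP (allP Hs l Hl)); apply/eqP; lia.
  have Hp : psum w' = size w' by apply/eqP; rewrite -all_count.
  have Hnn : psum w' + nsum w' = size w' by rewrite /psum /nsum -(count_predC (fun l : letter => l.2)).
  have Hsz : 0 < size w' by case: (w') Hh.
  have E := beq_es (beq_trans (beq_sym Hww') Heq).
  rewrite es_flatten in E; lia.
-
  exists (commw qw pw); split.
  + rewrite -winvYw valid_winv; exact: valid_small small_Yw n2.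
  + exists [:: (qw, pw)]; split.
      rewrite /= (fixes_pure n fixes_pw) (fixes_pure n fixes_qw) n2 andbT /=; lia.
    * exact: (beq_refl n (commw qw pw)).
  + exists Y1; split.
    * rewrite -winvYw; exact: run_sound n2 ch1_ok.
    * exact: valid_small small_Y1 n2.
    * by exists 2; exact: ipos_Y1.
  + exists (Yw ++ w'); split.
    * rewrite -winvYw winvK; exact: beq_catl.
    * by rewrite valid_cat Hw' (valid_small small_Yw n2).
    * exists i; rewrite -[Yw ++ w']cats0 -catA.
      apply: ipos_cat => //; exact: wok_small small_Yw Hgt.
-
  subst i.
  have [A [b [S [Ew' HS]]]] := last2 Hb Hh.
  have Hb2 : b.
    move: Hs; rewrite Ew' all_cat => /andP [_ /andP [/implyP H _]]; exact: H.
  move: Ew'; case: b Hb2 => // _ Ew'.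
  have HvA : valid n A by move: Hw'; rewrite Ew' valid_cat => /andP [].
  have HvS : valid n S by move: Hw'; rewrite Ew' valid_cat /= => /andP [_ /andP []].
  have HwA : wok 2 A.
    move: Hb Hs; rewrite Ew' !all_cat => /andP [h1 _] /andP [h2 _]; by rewrite /wok h1 h2.
  have [HwS HwSi] := wok_one HS.
  set P := conj S pw; set Q := conj S qw.
  have HvP : valid n P by rewrite /P /conj !valid_cat valid_winv HvS (valid_small small_pw n2).
  have HvQ : valid n Q by rewrite /Q /conj !valid_cat valid_winv HvS (valid_small small_qw n2).
  exists (w ++ commw P Q); split.
  + by rewrite valid_cat Hw /commw !valid_cat !valid_winv HvP HvQ ?HvS ?(valid_small small_pw n2) ?(valid_small small_qw n2).
  + exists (ps ++ [:: (P, Q)]); split.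
    * rewrite all_cat Hps /= HvP HvQ.
      by rewrite (fixes_pure n (fixes_conj S fixes_pw)) (fixes_pure n (fixes_conj S fixes_qw)).
    * rewrite map_cat flatten_cat /= cats0; apply: beq_cat Heq (beq_refl _ _).
  + exists (A ++ Z2 ++ S); split.
    * apply: beq_trans (beq_cat Hww' (commw_conj pw qw HvS)) _.
      rewrite Ew' /conj -Yw_def.
      have -> : (A ++ (2, true) :: S) ++ winv S ++ Yw ++ S
              = (A ++ [:: (2, true)]) ++ S ++ winv S ++ (Yw ++ S) by rewrite -!catA.
      apply: beq_trans (cancel_mid _ _ HvS) _.
      rewrite -catA.
      exact: (@beq_mid n A S ((2,true)::Yw) Z2 (run_sound n2 ch2_ok)).
    * by rewrite !valid_cat HvA HvS (valid_small small_Z2 n2).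
    * by exists 2; apply: ipos_cat HwA ipos_Z2 HwS.
  + exists (winv S ++ Y1 ++ S); split.
    * rewrite winv_cat winv_commw -catA.
      apply: beq_trans (beq_catl _ (cancel_l Hw)) _.
      rewrite cats0.
      apply: beq_trans (commw_conj qw pw HvS) _.
      rewrite /conj -winvYw.
      apply: (beq_mid (winv S) S); exact: run_sound n2 ch1_ok.
    * by rewrite !valid_cat valid_winv HvS (valid_small small_Y1 n2).
    * by exists 2; apply: ipos_cat HwSi ipos_Y1 HwS.
Qed.
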